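(* Let $G$ be a graph and $r$ a positive integer, and assume $G$ has a pair of vertices at distance between $2$ and $r$. For a choice of non-negative reals $y_{uv}$, one for each unordered pair $\{u,v\}$ of vertices at distance between $2$ and $r$ in $G$ (not all zero), set $x_u=\max_{z:uz\in E(G)}\sum_{v\in R_r(u,z)}y_{uv}$ for each $u\in V(G)$, and let $c$ be the maximum, over all such choices, of $\frac{\sum_{\{u,v\}:2\le d_G(u,v)\le r}y_{uv}}{\sum_{v\in V(G)}x_v}$. Then every fractional $r$-guidance system and every weak $r$-guidance system of $G$ has maximum outdegree at least $c$.
   Context: All graphs are finite, simple and undirected; $d_G$ is the distance in $G$. For $u,v$ at distance $\ell$, $\Gamma_G(u,v)$ is the set of neighbors of $u$ at distance $\ell-1$ from $v$. For an edge $uz$, $R_r(u,z)$ is the set of vertices $v$ with $2\le d_G(u,v)\le r$ and $z\in\Gamma_G(u,v)$. A partial orientation of $G$ is a directed graph $\vec{H}$ on $V(G)$ with every $(u,v)\in E(\vec{H})$ satisfying $uv\in E(G)$. $B_{\vec{H}}(v,a)$ is the set of vertices reachable from $v$ by a directed path of length at most $a$. A weak $r$-guidance system is a partial orientation $\vec{H}$ such that for any distinct $u,v$ at distance $\ell\le r$ there exist non-negative integers $a,b$ with $a+b=\ell-1$ such that $G$ has an edge between $B_{\vec{H}}(u,a)$ and $B_{\vec{H}}(v,b)$. A fractional orientation assigns a non-negative real $p(u,v)$ to each ordered pair of adjacent vertices; its maximum outdegree is $\max_u\sum_{v:uv\in E(G)}p(u,v)$. A fractional $r$-guidance system is a fractional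 orientation with $\sum_{y\in\Gamma_G(u,v)}p(u,y)+\sum_{y\in\Gamma_G(v,u)}p(v,y)\ge1$ for all $u,v$ with $2\le d_G(u,v)\le r$. *)

(* Defs.v *)
From mathcomp Require Import all_boot all_order all_algebra.
Set Implicit Arguments. Unset Strict Implicit. Unset Printing Implicit Defensive.
Import Order.TTheory GRing.Theory Num.Theory.

Section Defs.
Variable T : finType.

Definition simple_graph (e : rel T) : Prop := symmetric e /\ irreflexive e.

Fixpoint nball (e : rel T) (k : nat) (u : T) : {set T} :=
  match k with
  | 0 => [set u]
  | k'.+1 => nball e k' u :|: [set y | [exists x in nball e k' u, e x y]]
  end.

(* Graph distance: Some l if v is reachable from u, l the least length of a
   walk from u to v; None (= infinite) otherwise.  Any reachable vertex is
   reachable within #|T|-1 steps. *)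
Definition dist (e : rel T) (u v : T) : option nat :=
  let k := find (fun k => v \in nball e k u) (iota 0 #|T|) in
  if k < #|T| then Some k else None.

Definition in_range (e : rel T) (r : nat) (u v : T) : bool :=
  if dist e u v is Some l then (2 <= l <= r) else false.

Definition Gamma (e : rel T) (u v : T) : {set T} :=
  [set y | e u y && (if dist e u v is Some l then dist e y v == Some l.-1
                     else false)].

Definition Rr (e : rel T) (r : nat) (u z : T) : {set T} :=
  [set v | in_range e r u v && (z \in Gamma e u v)].

Definition dpairs (e : rel T) (r : nat) : {set {set T}} :=
  [set p : {set T} | [exists u, exists v, in_range e r u v && (p == [set u; v])]].

Definition partial_orientation (e H : rel T) : Prop :=
  forall u v, H u v -> e u v.

Definition weak_guidance (e H : rel T) (r : nat) : Prop :=
  forall u v l, u != v -> dist e u v = Some l -> l <= r ->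
    exists a b, a + b = l.-1 /\
      exists x y, [/\ x \in nball H a u, y \in nball H b v & e x y].

Definition max_outdeg_orient (H : rel T) : nat :=
  \max_(u : T) #|[set v | H u v]|.

Variable R : realFieldType.
Local Open Scope ring_scope.

(* Fractional orientation: nonnegative weights on ordered adjacent pairs
   (values on non-adjacent pairs are irrelevant). *)
Definition fractional_orientation (e : rel T) (p : T -> T -> R) : Prop :=
  forall u v, e u v -> 0 <= p u v.

Definition max_outdeg_frac (e : rel T) (p : T -> T -> R) : R :=
  \big[Num.max/0]_(u : T) \sum_(v | e u v) p u v.

Definition frac_guidance (e : rel T) (p : T -> T -> R) (r : nat) : Prop :=
  fractional_orientation e p /\
  forall u v, in_range e r u v ->
    1 <= \sum_(y in Gamma e u v) p u y + \sum_(y in Gamma e v u) p v y.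

Definition admissible (e : rel T) (r : nat) (y : {set T} -> R) : Prop :=
  (forall q, q \in dpairs e r -> 0 <= y q) /\
  (exists2 q, q \in dpairs e r & y q != 0).

Definition xval (e : rel T) (r : nat) (y : {set T} -> R) (u : T) : R :=
  \big[Num.max/0]_(z | e u z) \sum_(v in Rr e r u z) y [set u; v].

Definition ratio (e : rel T) (r : nat) (y : {set T} -> R) : R :=
  (\sum_(q in dpairs e r) y q) / (\sum_(v : T) xval e r y v).

Definition is_max_ratio (e : rel T) (r : nat) (c : R) : Prop :=
  (exists y, admissible e r y /\ ratio e r y = c) /\
  (forall y, admissible e r y -> ratio e r y <= c).

End Defs.

(* Main.v *)
Require Import Defs.
From mathcomp Require Import all_boot all_order all_algebra.
Import Order.TTheory GRing.Theory Num.Theory.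
Set Implicit Arguments. Unset Strict Implicit. Unset Printing Implicit Defensive.

Section G.
Variable T : finType.
Implicit Types (e : rel T).

Lemma nballP e k u x :
  reflect (exists s, [/\ path e u s, last u s = x & (size s <= k)%N])
          (x \in nball e k u).
Proof.
elim: k x => [|k IH] x /=.
  rewrite inE; apply: (iffP eqP) => [->|[[|? ?] [_ <- //]]].
  by exists [::].
rewrite in_setU inE; apply: (iffP orP).
  case=> [/IH [s [p l sz]]|/existsP [y /andP [/IH [s [p l sz]] eyx]]].
    by exists s; split=> //; rewrite ltnW.
  exists (rcons s x); rewrite rcons_path last_rcons size_rcons p l eyx.
  by split.
case=> s [p l sz]; case: (leqP (size s) k) => hs.
  by left; apply/IH; exists s.
idtac; move: p l sz hs; case/lastP: s => [//|s z].
rewrite rcons_path last_rcons size_rcons => /andP [p ez] <- sz hs.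
right; apply/existsP; exists (last u s); rewrite ez andbT; apply/IH; exists s.
by split.
Qed.

Lemma nball_mono e j k u x : (j <= k)%N -> x \in nball e j u -> x \in nball e k u.
Proof.
move=> jk /nballP [s [p l sz]]; apply/nballP; exists s; split=> //.
exact: leq_trans jk.
Qed.

Lemma nball_sub e (H : rel T) k u x : (forall a b, H a b -> e a b) ->
  x \in nball H k u -> x \in nball e k u.
Proof.
move=> sub /nballP [s [p l sz]]; apply/nballP; exists s; split=> //.
exact: sub_path p.
Qed.

Lemma nball_cat e j k u x y : x \in nball e j u -> y \in nball e k x ->
  y \in nball e (j + k) u.
Proof.
move=> /nballP [s [p l sz]] /nballP [t [q l' sz']]; apply/nballP.
exists (s ++ t); rewrite cat_path last_cat p l q l' size_cat; split=> //.
exact: leq_add.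
Qed.

Lemma nball_front e k u x : x \in nball e k u -> x != u ->
  exists2 w, e u w & x \in nball e k.-1 w.
Proof.
move=> /nballP [[|w s] [p l sz]]; first by rewrite -l eqxx.
move: p => /= /andP [euw p] _; exists w => //; apply/nballP; exists s.
by split=> //; case: k sz.
Qed.

Lemma nball_sym e k u x : symmetric e -> (x \in nball e k u) = (u \in nball e k x).
Proof.
move=> se.
suff H : forall u x, x \in nball e k u -> u \in nball e k x.
  by apply/idP/idP; apply: H.
move=> {}u {}x /nballP [s [p l sz]]; apply/nballP.
case: s p l sz => [|w s] p l sz.
  by exists [::]; rewrite -l.
exists (rev (belast u (w :: s))); split.
- rewrite -l rev_path; move: p; apply: sub_path => a b /=.
  by rewrite se.
- by rewrite /= rev_cons last_rcons.
- by rewrite size_rev size_belast.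
Qed.

Lemma dist_SomeP e u v l : dist e u v = Some l ->
  [/\ (l < #|T|)%N, v \in nball e l u & forall k, (k < l)%N -> v \notin nball e k u].
Proof.
rewrite /dist; set P := (fun k => _); case: ifP => // hl [<-].
have hs : (find P (iota 0 #|T|) < size (iota 0 #|T|))%N by rewrite size_iota.
split => //.
  by have := nth_find 0 (etrans (has_find _ _) hs); rewrite nth_iota.
move=> k hk; have := before_find 0 hk; rewrite nth_iota ?add0n //.
  by rewrite /P => ->.
exact: ltn_trans hk hl.
Qed.

Lemma dist_eq e u v l : (l < #|T|)%N -> v \in nball e l u ->
  (forall k, (k < l)%N -> v \notin nball e k u) -> dist e u v = Some l.
Proof.
move=> hl vin vnot; rewrite /dist; set P := (fun k => _).
have hP : has P (iota 0 #|T|).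
  by apply/hasP; exists l; rewrite ?mem_iota //.
have hs := hP; rewrite has_find size_iota in hs.
suff -> : find P (iota 0 #|T|) = l by rewrite hl.
case: (ltngtP (find P (iota 0 #|T|)) l) => // h.
  have := nth_find 0 hP; rewrite nth_iota // add0n => HH.
  by have := vnot _ h; rewrite /P in HH; rewrite HH.
have := before_find 0 h; rewrite nth_iota // add0n.
by rewrite /P vin.
Qed.

Lemma dist_sym e u v : symmetric e -> dist e u v = dist e v u.
Proof.
move=> se; rewrite /dist.
by rewrite (@eq_find _ (fun k => v \in nball e k u) (fun k => u \in nball e k v)) // => k; rewrite nball_sym.
Qed.

Lemma in_range_sym e r u v : symmetric e -> in_range e r u v = in_range e r v u.
Proof. by move=> se; rewrite /in_range dist_sym. Qed.

Lemma in_range_neq e r u v : in_range e r u v -> u != v.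
Proof.
rewrite /in_range; case E: dist => [l|//] /andP [h2 _].
apply/eqP => uv; subst v; case: (dist_SomeP E) => _ _ /(_ 0%N).
by rewrite (leq_trans _ h2) // inE eqxx => /(_ isT).
Qed.


Lemma nball1 e u w : e u w -> w \in nball e 1 u.
Proof. by move=> h; apply/nballP; exists [:: w]; rewrite /= h. Qed.

Lemma key e (H : rel T) u v l a b x y : symmetric e ->
  (forall a b, H a b -> e a b) -> dist e u v = Some l ->
  x \in nball H a u -> x != u -> y \in nball H b v -> e x y ->
  (a + b)%N = l.-1 -> exists2 w, H u w & w \in Gamma e u v.
Proof.
move=> se sub duv xin xu yin exy hab.
have [w Huw xw] := nball_front xin xu.
exists w => //.
have a0 : (0 < a)%N.
  by case: a xin {hab xw} => // /nballP [[|? ?] [_ /= l0 //]]; rewrite l0 eqxx in xu.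
have vw : v \in nball e l.-1 w.
  have h1 := nball_cat (nball_sub sub xw) (nball1 exy).
  have h2 : v \in nball e b y by rewrite nball_sym //; apply: nball_sub yin.
  have := nball_cat h1 h2; congr (_ \in nball e _ w).
  by rewrite -hab; clear -a0; case: a a0 => // a _; rewrite /= addn1.
case: (dist_SomeP duv) => hl vin vnot.
rewrite inE (sub _ _ Huw) duv /=; apply/eqP/dist_eq => //.
  exact: leq_ltn_trans (leq_pred l) hl.
move=> k hk; apply/negP => vk.
have := nball_cat (nball1 (sub _ _ Huw)) vk.
apply/negP/vnot; rewrite add1n.
by case: l {hl vin vnot duv vw hab} hk.
Qed.
End G.

Local Open Scope ring_scope.
Section R.
Variables (T : finType) (R : realFieldType) (e : rel T) (r : nat).

Lemma frac_bound (c : R) p : simple_graph e -> is_max_ratio e r c ->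
  frac_guidance e p r -> c <= max_outdeg_frac e p.
Proof.
move=> [se ie] [[y [[yge ynz] <-]] _] [pge guid].
set D := max_outdeg_frac e p.
have D0 : 0 <= D by apply: bigmax_ge_id.
have xge u : 0 <= xval e r y u by apply: bigmax_ge_id.
set X := \sum_v xval e r y v.
have X0 : 0 <= X by apply: sumr_ge0 => u _.
rewrite /Defs.ratio -/X.
have [->|Xn0] := eqVneq X 0; first by rewrite invr0 mulr0.
have Xp : 0 < X by rewrite lt_def Xn0 X0.
rewrite ler_pdivrMr //.
pose A u v := \sum_(z in Gamma e u v) p u z.
have Age u v : 0 <= A u v.
  apply: sumr_ge0 => z; rewrite inE => /andP [euz _]; exact: pge.
have ydp u v : in_range e r u v -> [set u; v] \in dpairs e r.
  by move=> h; rewrite inE; apply/existsP; exists u; apply/existsP; exists v; rewrite h eqxx.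
pose F (uv : T * T) := y [set uv.1; uv.2] * A uv.1 uv.2.
have Fge uv : in_range e r uv.1 uv.2 -> 0 <= F uv.
  by move=> h; rewrite /F mulr_ge0 // yge // ydp.
have step1 : \sum_(q in dpairs e r) y q <= \sum_(uv | in_range e r uv.1 uv.2) F uv.
  rewrite (partition_big (fun uv => [set uv.1; uv.2]) (fun q => q \in dpairs e r)) /=;
    last by case=> u v /= h; apply: ydp.
  apply: ler_sum => q qin.
  have := qin; rewrite inE => /existsP [a /existsP [b /andP [hab /eqP qE]]].
  have hba : in_range e r b a by rewrite in_range_sym.
  have ab : a != b := in_range_neq hab.
  rewrite (bigD1 (a, b)) /=; last by rewrite hab qE eqxx.
  rewrite (bigD1 (b, a)) /=; last first.
    by rewrite hba qE setUC eqxx /=; apply/negP => /eqP [ba _]; rewrite ba eqxx in ab.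
  rewrite addrA; apply: ler_wpDr.
    by apply: sumr_ge0 => uv /andP [/andP [/andP [h _] _] _]; apply: Fge.
  rewrite /F /= [[set b; a]]setUC -qE -mulrDr.
  have := guid _ _ hab; rewrite -/(A a b) -/(A b a) => g.
  by rewrite -{1}[y q]mulr1 ler_wpM2l // yge.
apply: (le_trans step1).
rewrite -(pair_big_dep xpredT (fun u v => in_range e r u v) (fun u v => F (u, v))) /=.
rewrite /X mulr_sumr; apply: ler_sum => u _.
rewrite /F /=.
have -> : \sum_(v | in_range e r u v) y [set u; v] * A u v =
   \sum_(z | e u z) (\sum_(v in Rr e r u z) y [set u; v]) * p u z.
  under eq_bigr => v _ do rewrite /A mulr_sumr.
  rewrite (exchange_big_dep (fun z => e u z)) /=; last first.
    by move=> v z _; rewrite inE => /andP [].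
  apply: eq_bigr => z _; rewrite mulr_suml; apply: eq_bigl => v.
  by rewrite /Rr [RHS]inE.
apply: (@le_trans _ _ (\sum_(z | e u z) xval e r y u * p u z)).
  apply: ler_sum => z euz; rewrite ler_wpM2r ?pge //.
  exact: (le_bigmax_cond _ (fun z => \sum_(v in Rr e r u z) y [set u; v]) euz).
rewrite -mulr_sumr mulrC; apply: ler_wpM2r => //.
exact: (le_bigmax _ (fun u => \sum_(v | e u v) p u v) u).
Qed.


Lemma weak_bound (c : R) (H : rel T) : simple_graph e -> is_max_ratio e r c ->
  partial_orientation e H -> weak_guidance e H r ->
  c <= (max_outdeg_orient H)%:R.
Proof.
move=> sg mr sub wg; have [se ie] := sg.
pose p u v : R := if H u v then 1 else 0.
have pge u v : 0 <= p u v by rewrite /p; case: (H u v).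
have ge1 (G : {set T}) u w : w \in G -> H u w -> 1 <= \sum_(z in G) p u z.
  move=> wG Huw; rewrite (bigD1 w) //= /p Huw ler_wpDr //.
  by apply: sumr_ge0 => z _; apply: pge.
have fg : frac_guidance e p r.
  split; first by move=> u v _; apply: pge.
  move=> u v huv.
  have uv := in_range_neq huv.
  move: (huv); rewrite /in_range; case duv: dist => [l|//] /andP [l2 lr].
  have [a [b [hab [x [y [xin yin exy]]]]]] := wg u v l uv duv lr.
  have s2 : 0 <= \sum_(z in Gamma e v u) p v z by apply: sumr_ge0.
  have s1 : 0 <= \sum_(z in Gamma e u v) p u z by apply: sumr_ge0.
  have [xu|xu] := eqVneq x u.
    subst x.
    have yv : y != v.
      apply/eqP => yv; subst y.
      case: (dist_SomeP duv) => _ _ /(_ 1%N) => hh.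
      by have := hh l2; rewrite (nball1 exy).
    have dvu : dist e v u = Some l by rewrite dist_sym.
    have eyx : e y u by rewrite se.
    have hba : (b + a)%N = l.-1 by rewrite addnC.
    have [w Hw wG] := key se sub dvu yin yv xin eyx hba.
    by rewrite -[1]add0r lerD // (ge1 _ _ w).
  have [w Hw wG] := key se sub duv xin xu yin exy hab.
  by rewrite -[1]addr0 lerD // (ge1 _ _ w).
apply: (le_trans (frac_bound sg mr fg)).
apply: bigmax_le => // u _.
have -> : \sum_(v | e u v) p u v = \sum_(v in [set v | H u v]) 1.
  rewrite big_mkcond /= [RHS]big_mkcond /=; apply: eq_bigr => v _.
  rewrite inE /p; case Huv: (H u v); first by rewrite (sub _ _ Huv).
  by case: (e u v).
rewrite sumr_const ler_nat.
rewrite /Defs.max_outdeg_orient. exact: leq_bigmax.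
Qed.

End R.

Unset Implicit Arguments. Set Strict Implicit.
Local Open Scope ring_scope.

Theorem lemma28 (T : finType) (R : realFieldType) (e : rel T) (r : nat)
  (c : R) :
  simple_graph e -> (0 < r)%N ->
  (exists u v, in_range e r u v) ->
  is_max_ratio e r c ->
  (forall p : T -> T -> R, frac_guidance e p r -> c <= max_outdeg_frac e p) /\
  (forall H : rel T, partial_orientation e H -> weak_guidance e H r ->
     c <= (max_outdeg_orient H)%:R).
Proof.
move=> sg _ _ mr; split.
  by move=> p fg; exact: (frac_bound sg mr fg).
by move=> H po wg; exact: (weak_bound sg mr po wg).
Qed.
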